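(* Let $X$ be a locally compact Hausdorff space, $F:X\multimap X$ a discrete multivalued dynamical system, and $N$ an isolating block with respect to $F$. Let $U$ be an open neighborhood of $F(N)\cap F^{-1}(N)\cap N$ with $\operatorname{cl}U\subset\operatorname{int}N$. Put $P_1:=(F(N)\cap N)\cup\operatorname{cl}U$ and $P_2:=F(N)\cap\operatorname{bd}N$. Then $P=(P_1,P_2)$ is a weak index pair in $N$.
   Context: A multivalued map $F:X\multimap Y$ assigns to each $x\in X$ a subset $F(x)\subset Y$; $F(A)=\bigcup_{x\in A}F(x)$; $F^{-1}(B)=\{x: F(x)\cap B\neq\emptyset\}$. A discrete multivalued dynamical system (dmds) on $X$ is a usc map $F:X\times\mathbb{Z}\multimap X$ with compact values such that $F(x,0)=\{x\}$; $F(F(x,n),m)=F(x,n+m)$ whenever $nm\ge0$; and $y\in F(x,-1)\iff x\in F(y,1)$; it is identified with its generator $F=F(\cdot,1)$. A solution for $F$ through $x$ on an interval $I\ni 0$ of $\mathbb{Z}$ is $\sigma:I\to X$ with $\sigma(0)=x$, $\sigma(n+1)\in F(\sigma(n))$. For $N\subset X$, $\operatorname{Inv}N$ is the set of $x\in N$ admitting a solution $\sigma:\mathbb{Z}\to N$ through $x$. A compact $N$ is an isolating block if $N\cap F(N)\cap F^{-1}(N)\subset\operatorname{int}N$. The $F$-boundary of $A\subset X$ is $\operatorname{bd}_F A:=\operatorname{cl}A\cap\operatorname{cl}(F(A)\setminus A)$. A pair $P=(P_1,P_2)$ of compact sets $P_2\subset P_1\subset N$ is a weak index pair in $N$ if (a)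 $F(P_i)\cap N\subset P_i$ for $i=1,2$; (b) $\operatorname{bd}_F P_1\subset P_2$; (c) $\operatorname{Inv}N\subset\operatorname{int}(P_1\setminus P_2)$; (d) $P_1\setminus P_2\subset\operatorname{int}N$. *)

(* Defs.v *)
From Stdlib Require Import ZArith List.
Open Scope Z_scope.

Definition set (X : Type) := X -> Prop.

Section Topo.
Context {X : Type}.

Definition subset (A B : set X) : Prop := forall x, A x -> B x.
Definition setI (A B : set X) : set X := fun x => A x /\ B x.
Definition setU (A B : set X) : set X := fun x => A x \/ B x.
Definition setD (A B : set X) : set X := fun x => A x /\ ~ B x.
Definition setC (A : set X) : set X := fun x => ~ A x.

Definition is_topology (opn : set X -> Prop) : Prop :=
  opn (fun _ => True) /\
  (forall U V, opn U -> opn V -> opn (setI U V)) /\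
  (forall (C : set X -> Prop), (forall U, C U -> opn U) ->
      opn (fun x => exists U, C U /\ U x)).

Definition interior (opn : set X -> Prop) (A : set X) : set X :=
  fun x => exists U, opn U /\ U x /\ subset U A.

Definition closure (opn : set X -> Prop) (A : set X) : set X :=
  fun x => forall U, opn U -> U x -> exists y, U y /\ A y.

Definition bd (opn : set X -> Prop) (A : set X) : set X :=
  setI (closure opn A) (closure opn (setC A)).

Definition compact (opn : set X -> Prop) (K : set X) : Prop :=
  forall (C : set X -> Prop), (forall U, C U -> opn U) ->
    (forall x, K x -> exists U, C U /\ U x) ->
    exists l : list (set X), (forall U, In U l -> C U) /\
      (forall x, K x -> exists U, In U l /\ U x).

Definition hausdorff (opn : set X -> Prop) : Prop :=
  forall x y, x <> y -> exists U V, opn U /\ opn V /\ U x /\ V y /\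
    (forall z, U z -> V z -> False).

Definition locally_compact (opn : set X -> Prop) : Prop :=
  forall x, exists K, compact opn K /\ interior opn K x.

(* multivalued maps F : X -o X, represented as relations: F x y <-> y \in F(x) *)
Definition mimage (F : X -> set X) (A : set X) : set X :=
  fun y => exists x, A x /\ F x y.
Definition mpreimage (F : X -> set X) (B : set X) : set X :=
  fun x => exists y, F x y /\ B y.

Definition usc (opn : set X -> Prop) (F : X -> set X) : Prop :=
  forall U, opn U -> opn (fun x => subset (F x) U).

(* F : X × Z -o X is usc for the product topology with Z discrete,
   i.e. each section F(·,n) is usc *)
Definition dmds (opn : set X -> Prop) (F : X -> Z -> set X) : Prop :=
  (forall n, usc opn (fun x => F x n)) /\
  (forall x n, compact opn (F x n)) /\
  (forall x y, F x 0 y <-> y = x) /\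
  (forall x n m, 0 <= n * m ->
     forall y, mimage (fun z => F z m) (F x n) y <-> F x (n + m) y) /\
  (forall x y, F x (-1) y <-> F y 1 x).

Definition isolating_block (opn : set X -> Prop) (F : X -> set X) (N : set X) : Prop :=
  compact opn N /\
  subset (setI N (setI (mimage F N) (mpreimage F N))) (interior opn N).

Definition Inv (F : X -> set X) (N : set X) : set X :=
  fun x => N x /\ exists sigma : Z -> X,
     sigma 0 = x /\ (forall n, F (sigma n) (sigma (n + 1))) /\ (forall n, N (sigma n)).

Definition F_bd (opn : set X -> Prop) (F : X -> set X) (A : set X) : set X :=
  setI (closure opn A) (closure opn (setD (mimage F A) A)).

Definition weak_index_pair (opn : set X -> Prop) (F : X -> set X)
    (N P1 P2 : set X) : Prop :=
  compact opn P1 /\ compact opn P2 /\ subset P2 P1 /\ subset P1 N /\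
  subset (setI (mimage F P1) N) P1 /\
  subset (setI (mimage F P2) N) P2 /\
  subset (F_bd opn F P1) P2 /\
  subset (Inv F N) (interior opn (setD P1 P2)) /\
  subset (setD P1 P2) (interior opn N).

End Topo.

(* Main.v *)
Require Import Defs.
From Stdlib Require Import ZArith List Classical.
Open Scope Z_scope.

Section H.
Variable X : Type.
Variable opn : set X -> Prop.
Hypothesis Htop : is_topology opn.

Lemma closure_incl A : subset A (closure opn A).
Proof. intros x Ax U oU Ux. exists x; auto. Qed.

Lemma closure_mono A B : subset A B -> subset (closure opn A) (closure opn B).
Proof. intros s x h U oU Ux. destruct (h U oU Ux) as [y [Uy Ay]]. exists y; auto. Qed.

Lemma closure_closure A : subset (closure opn (closure opn A)) (closure opn A).
Proof.
  intros x h U oU Ux. destruct (h U oU Ux) as [y [Uy cy]]. exact (cy U oU Uy).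
Qed.

Lemma int_bd_disj A x : interior opn A x -> closure opn (setC A) x -> False.
Proof.
  intros [V [oV [Vx s]]] c. destruct (c V oV Vx) as [y [Vy ny]]. apply ny, s, Vy.
Qed.

Lemma union_list_open (l : list (set X)) : (forall U, In U l -> opn U) ->
  opn (fun y => exists U, In U l /\ U y).
Proof. intros h. apply (proj2 (proj2 Htop)) with (C := fun U => In U l). exact h. Qed.

Lemma compact_closed : hausdorff opn -> forall K, compact opn K ->
  subset (closure opn K) K.
Proof.
  intros Hh K HK x Hx. destruct (classic (K x)) as [k|nk]; auto. exfalso.
  set (C := fun U => opn U /\ exists V, opn V /\ V x /\ forall z, U z -> V z -> False).
  destruct (HK C) as [l [Hl Hcov]].
  - intros U [H _]; exact H.
  - intros y Ky. assert (Hne : x <> y) by (intro; subst; auto).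
    destruct (Hh x y Hne) as [V [W [oV [oW [Vx [Wy D]]]]]].
    exists W. split; [|exact Wy]. split; [exact oW|]. exists V.
    split; [exact oV|]. split; [exact Vx|].
    intros z Wz Vz; eapply D; eauto.
  - assert (E : exists W, opn W /\ W x /\ forall U, In U l -> forall z, U z -> W z -> False).
    { clear Hcov. revert Hl. induction l as [|U l IH]; intros Hl.
      - exists (fun _ => True). split; [apply Htop|]. split; [auto|intros U []].
      - destruct IH as [W [oW [Wx HW]]]. intros; apply Hl; right; auto.
        destruct (Hl U (or_introl eq_refl)) as [oU [V [oV [Vx HV]]]].
        exists (setI W V). split; [apply Htop; auto|]. split; [split; auto|].
        intros U' [<-|i] z Uz [Wz Vz]; eauto. }
    destruct E as [W [oW [Wx HW]]]. destruct (Hx W oW Wx) as [y [Wy Ky]].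
    destruct (Hcov y Ky) as [U [i Uy]]. eapply HW; eauto.
Qed.

Lemma closed_in_compact K A : compact opn K -> subset A K ->
  subset (closure opn A) A -> compact opn A.
Proof.
  intros HK sub cl C HC Hcov.
  set (C' := fun V => C V \/ (opn V /\ forall z, V z -> A z -> False)).
  destruct (HK C') as [l [Hl Hc]].
  - intros V [h|[h _]]; auto.
  - intros x Kx. destruct (classic (A x)) as [a|na].
    + destruct (Hcov x a) as [U [CU Ux]]. exists U. split; [left|]; auto.
    + destruct (classic (exists V, opn V /\ V x /\ forall z, V z -> A z -> False))
        as [[V [oV [Vx HV]]]|nE].
      * exists V; split; [right; auto| auto].
      * exfalso. apply na, cl. intros V oV Vx.
        destruct (classic (exists y, V y /\ A y)) as [e|ne]; auto.
        exfalso; apply nE; exists V; split; [auto|split; [auto|]].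
        intros z Vz Az; apply ne; eauto.
  - assert (E : exists l', (forall U, In U l' -> C U) /\ forall x, A x ->
        (exists U, In U l /\ U x) -> exists U, In U l' /\ U x).
    { clear Hc. revert Hl. induction l as [|U l IH]; intros Hl.
      - exists nil. split; [intros U []|]. intros x _ [U [[] _]].
      - destruct IH as [l' [H1 H2]]. intros V i; apply Hl; right; auto.
        destruct (Hl U (or_introl eq_refl)) as [CU | [oU HU]].
        + exists (U :: l'). split. intros V [<-|i]; auto.
          intros x Ax [V [[<-|i] Vx]]. exists U; split; [left|]; auto.
          destruct (H2 x Ax (ex_intro _ V (conj i Vx))) as [W [iW Wx]].
          exists W; split; [right|]; auto.
        + exists l'. split; auto. intros x Ax [V [[<-|i] Vx]].
          exfalso; eauto. eapply H2; eauto. }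
    destruct E as [l' [H1 H2]]. exists l'. split; [exact H1|]. intros x Ax. apply H2; auto.
Qed.

Lemma compact_union K1 K2 : compact opn K1 -> compact opn K2 -> compact opn (setU K1 K2).
Proof.
  intros H1 H2 C HC Hcov.
  destruct (H1 C HC) as [l1 [a1 b1]]. intros x k; apply Hcov; left; auto.
  destruct (H2 C HC) as [l2 [a2 b2]]. intros x k; apply Hcov; right; auto.
  exists (l1 ++ l2). split.
  - intros U i; apply in_app_or in i; destruct i; auto.
  - intros x [k|k].
    + destruct (b1 x k) as [U [i Ux]]; exists U; split; auto; apply in_or_app; auto.
    + destruct (b2 x k) as [U [i Ux]]; exists U; split; auto; apply in_or_app; auto.
Qed.

Lemma compact_image (F : X -> set X) K : usc opn F -> (forall x, compact opn (F x)) ->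
  compact opn K -> compact opn (mimage F K).
Proof.
  intros Hu Hc HK C HC Hcov.
  set (D := fun V => opn V /\ exists l, (forall U, In U l -> C U) /\
          forall z, V z -> forall y, F z y -> exists U, In U l /\ U y).
  destruct (HK D) as [lK [HlK HcK]].
  - intros V [h _]; auto.
  - intros x Kx. destruct (Hc x C HC) as [l [Hl Hcl]].
    { intros y Fy. apply Hcov. exists x; auto. }
    exists (fun z => subset (F z) (fun y => exists U, In U l /\ U y)). split.
    + split. apply Hu. apply union_list_open. intros; apply HC, Hl; auto.
      exists l; split; [exact Hl|]. intros z Vz y Fy; apply Vz; auto.
    + exact Hcl.
  - assert (E : exists L, (forall U, In U L -> C U) /\ forall V, In V lK ->
        forall z, V z -> forall y, F z y -> exists U, In U L /\ U y).
    { clear HcK. revert HlK. induction lK as [|V lK IH]; intros HlK.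
      - exists nil; split; [intros U []| intros V []].
      - destruct IH as [L [a b]]. intros; apply HlK; right; auto.
        destruct (HlK V (or_introl eq_refl)) as [_ [l [a' b']]].
        exists (l ++ L). split. intros U i; apply in_app_or in i; destruct i; auto.
        intros V' [<-|i] z Vz y Fy.
        + destruct (b' z Vz y Fy) as [U [iU Uy]]; exists U; split; auto; apply in_or_app; auto.
        + destruct (b V' i z Vz y Fy) as [U [iU Uy]]; exists U; split; auto; apply in_or_app; auto. }
    destruct E as [L [a b]]. exists L; split; auto. intros y [x [Kx Fy]].
    destruct (HcK x Kx) as [V [iV Vx]]. eapply b; eauto.
Qed.

End H.

Theorem theorem4 (X : Type) (opn : set X -> Prop) (F : X -> Z -> set X)
  (N U : set X) :
  is_topology opn -> hausdorff opn -> locally_compact opn ->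
  dmds opn F ->
  isolating_block opn (fun x => F x 1) N ->
  opn U ->
  subset (setI (mimage (fun x => F x 1) N)
            (setI (mpreimage (fun x => F x 1) N) N)) U ->
  subset (closure opn U) (interior opn N) ->
  weak_index_pair opn (fun x => F x 1) N
    (setU (setI (mimage (fun x => F x 1) N) N) (closure opn U))
    (setI (mimage (fun x => F x 1) N) (bd opn N)).
Proof.
  intros Htop Hh Hlc Hd [HNc HNb] oU HU HclU.
  destruct Hd as [Husc [Hcv _]].
  set (FN := mimage (fun x => F x 1) N).
  set (P1 := setU (setI FN N) (closure opn U)).
  set (P2 := setI FN (bd opn N)).
  assert (cFN : compact opn FN).
  { apply (compact_image X opn Htop); [exact (Husc 1)|intros x; exact (Hcv x 1)|exact HNc]. }
  assert (clFN : subset (closure opn FN) FN) by (apply compact_closed; auto).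
  assert (clN : subset (closure opn N) N) by (apply compact_closed; auto).
  assert (intN : subset (interior opn N) N) by (intros x [V [_ [Vx s]]]; auto).
  assert (h4 : subset P1 N).
  { intros x [[_ h]|h]; auto. }
  assert (h1 : compact opn P1).
  { apply compact_union; auto.
    - apply (closed_in_compact X opn FN); auto. intros x [a b]; auto.
      intros x h; split; [apply clFN| apply clN]; (eapply closure_mono; [|exact h]);
        intros y [a b]; auto.
    - apply (closed_in_compact X opn N); auto. intros x h; auto.
      apply closure_closure. }
  assert (h2 : compact opn P2).
  { apply (closed_in_compact X opn FN); auto. intros x [a b]; auto.
    intros x h; split; [apply clFN; eapply closure_mono; [|exact h]; intros y [a b]; auto|].
    split; apply closure_closure; (eapply closure_mono; [|exact h]); intros y [a [b c]]; auto. }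
  assert (h3 : subset P2 P1).
  { intros x [a [b c]]; left; split; auto. }
  assert (h5 : subset (setI (mimage (fun x => F x 1) P1) N) P1).
  { intros y [[x [P1x Fxy]] Ny]; left; split; auto. exists x; split; auto. }
  assert (h6 : subset (setI (mimage (fun x => F x 1) P2) N) P2).
  { intros y [[x [[FNx bdx] Fxy]] Ny]. exfalso.
    assert (ix : interior opn N x).
    { apply HNb. split; [apply clN, (proj1 bdx)|]. split; auto. exists y; auto. }
    exact (int_bd_disj X opn N x ix (proj2 bdx)). }
  assert (h7 : subset (F_bd opn (fun x => F x 1) P1) P2).
  { intros x [c1 c2].
    assert (P1x : P1 x) by (apply (compact_closed X opn Htop Hh P1 h1); auto).
    split.
    - apply clFN. eapply closure_mono; [|exact c2].
      intros y [[z [Pz Fzy]] _]. exists z; auto.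
    - split; [apply closure_incl; auto|].
      eapply closure_mono; [|exact c2].
      intros y [m nP] Ny. apply nP, h5. split; auto. }
  assert (h8 : subset (Inv (fun x => F x 1) N) (interior opn (setD P1 P2))).
  { intros x [Nx [s [s0 [sF sN]]]].
    assert (Ux : U x).
    { apply HU. split; [|split; auto].
      - exists (s (-1)). split; auto. rewrite <- s0. exact (sF (-1)).
      - exists (s 1). split; auto. rewrite <- s0. exact (sF 0). }
    exists U. split; auto. split; auto.
    intros y Uy. split; [right; apply closure_incl; auto|].
    intros [_ bdy]. apply (int_bd_disj X opn N y); [|exact (proj2 bdy)].
    apply HclU, closure_incl; auto. }
  assert (h9 : subset (setD P1 P2) (interior opn N)).
  { intros x [[[FNx Nx]|clx] nP2]; [|auto].
    destruct (classic (exists V, opn V /\ V x /\ subset V N)) as [e|ne]; [exact e|].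
    exfalso; apply nP2. split; auto. split; [apply closure_incl; auto|].
    intros V oV Vx.
    destruct (classic (exists y, V y /\ setC N y)) as [e|ne']; auto.
    exfalso; apply ne; exists V; split; [auto|split; [auto|]].
    intros y Vy. destruct (classic (N y)); auto. exfalso; apply ne'; eauto. }
  exact (conj h1 (conj h2 (conj h3 (conj h4 (conj h5 (conj h6 (conj h7 (conj h8 h9)))))))).
Qed.
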